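(* Let $r,\theta$ be real numbers with $1\le\theta\le 0.5r\le 3\theta$, and let $q(x)=1-(r-\theta)x+(r-2\theta)x^2+\theta x^3$. Then $q$ has a real root $\alpha<-1$, and if $\beta,\gamma$ denote the remaining two (complex) roots of $q$, then $\beta\gamma$ is real and $0<\beta\gamma<1$.
   Context: Note $q(x)=1+rx(x-1)+\theta x(x-1)^2$ and $q(x)=(1-x/\alpha)(1-x/\beta)(1-x/\gamma)$ where $\alpha,\beta,\gamma$ are the roots of $q$ (counted with multiplicity). *)

(* Defs.v *)
From mathcomp Require Import all_boot all_order all_algebra.
From mathcomp Require Import complex.
Set Implicit Arguments. Unset Strict Implicit. Unset Printing Implicit Defensive.
Import Order.TTheory GRing.Theory Num.Theory.
Local Open Scope ring_scope.

Definition qcubic (F : nzRingType) (r theta : F) : {poly F} :=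
  1 - (r - theta)%:P * 'X + (r - 2 * theta)%:P * 'X^2 + theta%:P * 'X^3.

(* Main.v *)
Require Import Defs.
From mathcomp Require Import all_boot all_order all_algebra.
From mathcomp Require Import complex.
From mathcomp Require Import ring lra.
Import Order.TTheory GRing.Theory Num.Theory.
Local Open Scope ring_scope.

Lemma qc_horner (F : comNzRingType) (r theta x : F) :
  (qcubic r theta).[x] = 1 - (r - theta) * x + (r - 2 * theta) * x ^+ 2 + theta * x ^+ 3.
Proof. by rewrite /qcubic !hornerE. Qed.

Theorem mainTheorem6 (R : rcfType) (r theta : R) :
  1 <= theta -> theta <= r / 2 -> r / 2 <= 3 * theta ->
  exists alpha : R, alpha < -1 /\ (qcubic r theta).[alpha] = 0 /\
    forall beta gamma : R[i],
      qcubic (r%:C)%C (theta%:C)%C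
        = (theta%:C)%C%:P * ('X - (alpha%:C)%C%:P) * ('X - beta%:P) * ('X - gamma%:P) ->
      exists t : R, beta * gamma = (t%:C)%C /\ 0 < t /\ t < 1.
Proof.
move=> h1 h2 h3.
have hm : (qcubic r theta).[-6] <= 0.
  rewrite qc_horner; nra.
have hp : 0 < (qcubic r theta).[-1].
  rewrite qc_horner; nra.
have [a /andP [ha1 ha2] ra] := @poly_ivt R (qcubic r theta) (-6) (-1) ltac:(lra)
   (introT andP (conj hm (ltW hp))).
have rA : (qcubic r theta).[a] = 0 by apply/eqP.
have ha : a < -1.
  rewrite lt_neqAle ha2 andbT; apply/eqP => E; move: hp; rewrite -E rA; lra.
exists a; split => //; split => // beta gamma Hf.
have H0 := congr1 (fun p => p.[0]) Hf; move: H0 => /=.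
rewrite [LHS](_ : _ = 1); last by rewrite qc_horner; ring.
rewrite !hornerE => H0.
have tn : theta * a != 0 by apply/eqP => E; nra.
have cn : ((theta * a)%:C)%C != 0 by rewrite (inj_eq (@complexI R)).
have E : ((theta * a)%:C)%C * (beta * gamma) = -1.
  by rewrite rmorphM /= H0; ring.
exists (- (theta * a)^-1); split; last first.
  have hl : theta * a < -1 by nra.
  have hu : (theta * a) * (theta * a)^-1 = 1 by rewrite mulfV.
  have hv : (theta * a)^-1 < 0 by rewrite invr_lt0; lra.
  split; nra.
apply: (mulfI cn); rewrite E -rmorphM /= mulrN mulfV //.
by rewrite rmorphN rmorph1.
Qed.
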